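(* Suppose a group $G$ admits a $\mathscr{Z}$-structure $(\overline{X},Z)$. Then $\overline{X}$ is a controlled $\mathscr{Z}$-compactification of $X=\overline{X}- Z$.
   Context: A closed subset $A$ of an ANR $Y$ is a $\mathscr{Z}$-set if there is a homotopy $H:Y\times[0,1]\to Y$ with $H_0=\mathrm{id}_Y$ and $H_t(Y)\subset Y- A$ for every $t>0$. A $\mathscr{Z}$-structure on a group $G$ is a pair of spaces $(\overline{X},Z)$ such that: (1) $\overline{X}$ is a compact AR; (2) $Z$ is a $\mathscr{Z}$-set in $\overline{X}$; (3) $X=\overline{X}- Z$ is a proper metric space (metric $d$) on which $G$ acts properly, cocompactly, by isometries; (4) (nullity condition) for every compact $C\subseteq X$ and every open cover $\mathscr{U}$ of $\overline{X}$, all but finitely many $G$-translates of $C$ lie in some element of $\mathscr{U}$. A controlled $\mathscr{Z}$-compactification of a proper metric space $(X,d)$ is a compactification $\overline{X}=X\cup Z$ (with some metric $\overline{d}$ inducing the topology of $\overline{X}$) such that (i) $Z$ is a $\mathscr{Z}$-set in $\overline{X}$, and (ii) for every $\epsilon>0$ and $R>0$ there is a compact $K\subset X$ such that every ball of radius $R$ in $(X,d)$ not intersecting $K$ has $\overline{d}$-diameter less than $\epsilon$. *)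

(* Defs.v *)
From HB Require Import structures.
From mathcomp Require Import all_boot all_order all_algebra.
From mathcomp Require Import all_classical all_reals all_analysis.
From mathcomp Require monoid.
Set Implicit Arguments. Unset Strict Implicit. Unset Printing Implicit Defensive.
Import Order.TTheory GRing.Theory Num.Theory numFieldNormedType.Exports.
Local Open Scope classical_set_scope.
Local Open Scope ring_scope.

Section ZStructures.
Variable R : realType.

Definition is_metric_on (T : Type) (A : set T) (d : T -> T -> R) : Prop :=
  forall x y z, A x -> A y -> A z ->
    [/\ 0 <= d x y, d x y = 0 <-> x = y, d x y = d y x
      & d x z <= d x y + d y z].

Definition dball (T : Type) (A : set T) (d : T -> T -> R) (x : T) (r : R)
  : set T := [set y | A y /\ d x y < r].

Definition induces_topology_on (T : topologicalType) (A : set T)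
    (d : T -> T -> R) : Prop :=
  forall x, A x ->
    (forall U : set T, open U -> U x ->
       exists2 r : R, 0 < r & dball A d x r `<=` U) /\
    (forall r : R, 0 < r ->
       exists U : set T, [/\ open U, U x & U `&` A `<=` dball A d x r]).

Definition metrizable (T : topologicalType) : Prop :=
  exists d : T -> T -> R, is_metric_on setT d /\ induces_topology_on setT d.

Definition embedding (T M : topologicalType) (e : T -> M) : Prop :=
  [/\ continuous e, injective e &
      forall U : set T, open U -> exists2 V : set M, open V & e @^-1` V = U].

Definition closed_embedding (T M : topologicalType) (e : T -> M) : Prop :=
  embedding e /\ closed (range e).

Definition is_AR (T : topologicalType) : Prop :=
  metrizable T /\
  forall (M : topologicalType) (e : T -> M), metrizable M -> closed_embedding e ->
    exists r : M -> T, continuous r /\ forall x, r (e x) = x.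

Definition is_ANR (T : topologicalType) : Prop :=
  metrizable T /\
  forall (M : topologicalType) (e : T -> M), metrizable M -> closed_embedding e ->
    exists U : set M, exists r : M -> T,
      [/\ open U, range e `<=` U, {within U, continuous r} &
          forall x, r (e x) = x].

Definition Zset (T : topologicalType) (A : set T) : Prop :=
  is_ANR T /\ closed A /\
  exists H : T * R -> T,
    [/\ {within [set p : T * R | 0 <= p.2 <= 1], continuous H},
        forall y, H (y, 0) = y &
        forall y (t : R), 0 < t <= 1 -> ~ A (H (y, t))].

Definition diam_lt (T : Type) (dbar : T -> T -> R) (S : set T) (e : R) : Prop :=
  exists2 e' : R, e' < e & forall x y, S x -> S y -> dbar x y <= e'.

Definition proper_metric_on (T : topologicalType) (A : set T) (d : T -> T -> R)
  : Prop :=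
  [/\ is_metric_on A d, induces_topology_on A d &
      forall x (r : R), A x -> compact [set y | A y /\ d x y <= r]].

(* Z-structure on the group G: Xbar = T, boundary Z, X = ~` Z with metric d,
   and the action act of G on X. *)
Definition Zstructure (G : monoid.Group.type) (T : topologicalType) (Z : set T)
    (d : T -> T -> R) (act : G -> T -> T) : Prop :=
  let X := ~` Z in
  [/\ compact [set: T] /\ is_AR T,
      Zset Z,
      proper_metric_on X d &
     [/\
      [/\ forall x, X x -> act (@monoid.one G) x = x,
          forall g h x, X x -> act (monoid.mul g h) x = act g (act h x),
          forall g x, X x -> X (act g x) &
          forall g x y, X x -> X y -> d (act g x) (act g y) = d x y],
      (forall K : set T, compact K -> K `<=` X ->
         finite_set [set g : G | exists2 x, K x & K (act g x)]),
      (exists C : set T, [/\ compact C, C `<=` X &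
          X `<=` \bigcup_(g in [set: G]) (act g @` C)]) &
      forall (C : set T) (UU : set (set T)),
        compact C -> C `<=` X ->
        (forall U, UU U -> open U) -> [set: T] `<=` \bigcup_(U in UU) U ->
        finite_set [set g : G | ~ exists2 U, UU U & act g @` C `<=` U]]].

Definition controlled_Zcompactification (T : topologicalType) (Z : set T)
    (d : T -> T -> R) : Prop :=
  let X := ~` Z in
  [/\ proper_metric_on X d, compact [set: T], closure X = [set: T],
      Zset Z &
      exists dbar : T -> T -> R,
        [/\ is_metric_on setT dbar, induces_topology_on setT dbar &
            forall eps r : R, 0 < eps -> 0 < r ->
              exists K : set T, [/\ compact K, K `<=` X &
                forall x, X x -> dball X d x r `&` K = set0 ->
                  diam_lt dbar (dball X d x r) eps]]].

End ZStructures.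

(* Main.v *)
Require Import Defs.
From HB Require Import structures.
From mathcomp Require Import all_boot all_order all_algebra.
From mathcomp Require Import all_classical all_reals all_analysis.
From mathcomp Require monoid.
From mathcomp Require Import lra.
Import Order.TTheory GRing.Theory Num.Theory numFieldNormedType.Exports.
Local Open Scope classical_set_scope.
Local Open Scope ring_scope.

Lemma closure_part {R : realType} (T : topologicalType) (Z : set T) :
  @Zset R T Z -> closure (~` Z) = [set: T].
Proof.
move=> [_ [_ [H [cH H0 HZ]]]].
apply/seteqP; split => // z _ B nB.
have [nZz|Zz] := pselect (~ Z z); first by exists z; split => //; apply: nbhs_singleton.
have Az : [set p : T * R | 0 <= p.2 <= 1] (z, 0) by rewrite /= lexx ler01.
move/subspace_continuousP: cH => /(_ _ Az) cz.
rewrite /from_subspace /= H0 in cz.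
move: (cz B nB).
rewrite nbhs_simpl /= /within /=.
case=> [[U V] [/= nU nV] UV].
move/nbhs_ballP: nV => [e /= e0 He].
pose t := Num.min (e / 2) 1.
have t0 : 0 < t by rewrite lt_min divr_gt0 // ltr01.
have t1 : t <= 1 by rewrite ge_min lexx orbT.
have Vt : V t.
  apply: He; rewrite /ball /= sub0r normrN gtr0_norm //.
  by rewrite gt_min ltr_pdivrMr // ltr_pMr // ltr1n.
have := UV (z, t) (conj (nbhs_singleton nU) Vt).
move=> /(_ _) hB.
exists (H (z, t)); split; last by apply: hB; rewrite /= (ltW t0) t1.
by apply: HZ; rewrite t0 t1.
Qed.

Lemma compact_bigcup_fin (T : topologicalType) (I : choiceType) (F : set I)
  (f : I -> set T) : finite_set F -> (forall i, F i -> compact (f i)) ->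
  compact (\bigcup_(i in F) f i).
Proof.
move=> /finite_seqP [s ->] cf; rewrite bigcup_seq big_seq.
by apply: bigsetU_compact => i /= ; apply: cf.
Qed.

Lemma bounded_compact {R : realType} (T : topologicalType) (X C : set T)
  (d : T -> T -> R) (c0 : T) :
  is_metric_on X d -> induces_topology_on X d -> compact C -> C `<=` X -> X c0 ->
  exists M0 : R, forall c, C c -> d c0 c <= M0.
Proof.
move=> md td cC CX Xc0.
move/compact_near_coveringP: cC => /(_ R (+oo) (fun M x => X x -> d c0 x <= M) _).
case.
  move=> x Cx.
  have [U [oU Ux UX]] := (td x (CX x Cx)).2 1 ltr01.
  exists (U, [set M | d c0 x + 1 < M]).
    split; first exact: open_nbhs_nbhs.
    by exists (d c0 x + 1); split => //; exact: num_real.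
  case=> y M /= [Uy hM] Xy.
  have [_ dxy] := UX y (conj Uy Xy).
  have [_ _ _ tri] := md c0 x y Xc0 (CX x Cx) Xy.
  apply: (le_trans tri); apply: ltW; apply: lt_trans hM.
  by rewrite ltrD2l.
move=> M [_ HM]; exists (M + 1) => c Cc.
by apply: (HM (M + 1)) => //; [rewrite ltrDl ltr01 | exact: CX].
Qed.

Theorem lemma12 (R : realType) (G : monoid.Group.type) (T : topologicalType)
    (Z : set T) (d : T -> T -> R) (act : G -> T -> T) :
  @Zstructure R G T Z d act -> @controlled_Zcompactification R T Z d.
Proof.
move=> [[cT [[dbar [mb tb]] _]] zs pm [[a1 aM aX aI] _ [C [cC CX XC]] null]].
rewrite /controlled_Zcompactification /=.
split; [exact: pm|exact: cT|exact: (@closure_part R T Z zs)|exact: zs|].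
exists dbar; split => // eps r e0 r0.
have [md td pd] := pm.
have [[c0 Cc0]|C0] := pselect (exists c, C c); last first.
  exists set0; split => //; first exact: compact0.
  move=> x Xx; have [g _ [c Cc _]] := XC x Xx.
  by exfalso; apply: C0; exists c.
have Xc0 := CX c0 Cc0.
have [M0 HM0] := @bounded_compact R T _ C d c0 md td cC CX Xc0.
pose D := [set y | (~` Z) y /\ d c0 y <= M0 + r].
have cD : compact D by exact: pd.
have DX : D `<=` ~` Z by move=> y [].
pose UU := [set U : set T | open U /\ exists z, U `<=` dball setT dbar z (eps / 3)].
have oUU : forall U, UU U -> open U by move=> U [].
have covUU : [set: T] `<=` \bigcup_(U in UU) U.
  move=> z _; have [U [oU Uz Usub]] := (tb z I).2 (eps / 3) (divr_gt0 e0 (ltr0n _ 3)).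
  exists U => //; split => //; exists z => y Uy; exact: Usub.
have finF := null D UU cD DX oUU covUU.
pose F := [set g : G | ~ exists2 U, UU U & act g @` D `<=` U].
pose K := \bigcup_(g in F) [set y | (~` Z) y /\ d (act g c0) y <= M0].
exists K; split.
- apply: compact_bigcup_fin => // g _; apply: pd; exact: aX.
- by move=> y [g _ []].
move=> x Xx Hempty.
have [g _ [c Cc gcx]] := XC x Xx.
have [Fg|nFg] := pselect (F g).
  exfalso.
  have : (dball (~` Z) d x r `&` K) x.
    split.
      split => //; have [_ [_ h] _ _] := md x x x Xx Xx Xx.
      by rewrite (h erefl).
    exists g => //; split => //; rewrite -gcx aI //; [exact: HM0|exact: CX].
  by rewrite Hempty.
have [U [_ [z Uz]] DU] : exists2 U, UU U & act g @` D `<=` U.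
  by apply: contrapT.
have ballD : dball (~` Z) d x r `<=` act g @` D.
  move=> y [Xy dxy].
  exists (act (monoid.inv g) y); last first.
    by rewrite -aM // monoid.mulgV a1.
  have Xy' := aX (monoid.inv g) y Xy.
  split => //.
  have [_ _ _ tri] := md c0 c (act (monoid.inv g) y) Xc0 (CX c Cc) Xy'.
  apply: (le_trans tri); apply: lerD; first exact: HM0.
  apply: ltW; move: dxy; rewrite -gcx -(aI g c (act (monoid.inv g) y)) //; [|exact: CX]; rewrite -aM // monoid.mulgV a1 //.
exists (eps / 3 + eps / 3).
  lra.
move=> y1 y2 h1 h2.
have [_ b1] := Uz _ (DU _ (ballD _ h1)).
have [_ b2] := Uz _ (DU _ (ballD _ h2)).
have [_ _ sym tri] := mb z y1 y2 I I I.
have [_ _ sym1 _] := mb y1 z y2 I I I.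
apply: le_trans (_ : dbar y1 z + dbar z y2 <= _).
  have [_ _ _ tri'] := mb y1 z y2 I I I; exact: tri'.
by rewrite sym1; apply: ltW; apply: ltrD.
Qed.
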